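(* Assume the van Kampen setup below, with compatible future retracts $Q_k:\vec\pi_1(X_k)\to\vec\pi_1(X_k,B_k)$ and compatible future retracts $P_k:\vec\pi_1(X_k,B_k)\to\vec\pi_1(X_k,A_k)$ ($k=0,1,2$), and let $P:\vec\pi_1(X,B)\to\vec\pi_1(X,A)$ be the unique functor with $P\circ j_k=j'_k\circ P_k$ ($k=1,2$). For $x\in B$ let $\eta_x:x\to P(x)$ be the image in $\vec\pi_1(X,B)$ of the unit $\eta^k_x$ of $P_k$ for any $k\in\{1,2\}$ with $x\in B_k$ (this does not depend on $k$). Then for every morphism $[\gamma]:x\to y$ of $\vec\pi_1(X,B)$ one has $\eta_y\circ[\gamma]=P([\gamma])\circ\eta_x$ in $\vec\pi_1(X,B)$.
   Context: A d-space is a topological space with a set of continuous paths $[0,1]\to X$ (dipaths) containing all constant paths, closed under precomposition with continuous non-decreasing maps $[0,1]\to[0,1]$ and under concatenation; subsets carry the dipaths with image in them. The fundamental category $\vec\pi_1(X)$ has objects the points of $X$ and morphisms $a\to b$ the classes of dipaths from $a$ to $b$ modulo the equivalence relation generated by endpoint-fixing directed homotopies; composition is concatenation. For $A\subseteq X$, $\vec\pi_1(X,A)$ is the full subcategory on objects in $A$. For $A\subseteq B\subseteq X$ with inclusion $\iota:\vec\pi_1(X,A)\to\vec\pi_1(X,B)$, a future retract is a functor $P:\vec\pi_1(X,B)\to\vec\pi_1(X,A)$ left adjoint to $\iota$ whose unit satisfies $\eta_a=\mathrm{id}_a$ for $a\in A$. Van Kampen setup: $X$ a d-space, $X_1,X_2\subseteq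 X$ with $X=\mathrm{Int}(X_1)\cup\mathrm{Int}(X_2)$, dipaths of $X$ the finite concatenations of dipaths of $X_1$ and $X_2$, $X_0=X_1\cap X_2$. For $k=0,1,2$, $A_k\subseteq B_k\subseteq X_k$ with $A_0=A_1\cap A_2$, $B_0=B_1\cap B_2$, $A=A_1\cup A_2$, $B=B_1\cup B_2$, $A=\mathrm{Int}_A(A_1)\cup\mathrm{Int}_A(A_2)$, $B=\mathrm{Int}_B(B_1)\cup\mathrm{Int}_B(B_2)$. Inclusion-induced functors: $i_k:\vec\pi_1(X_0,B_0)\to\vec\pi_1(X_k,B_k)$, $j_k:\vec\pi_1(X_k,B_k)\to\vec\pi_1(X,B)$, $i'_k:\vec\pi_1(X_0,A_0)\to\vec\pi_1(X_k,A_k)$, $j'_k:\vec\pi_1(X_k,A_k)\to\vec\pi_1(X,A)$ ($k=1,2$). Compatible future retracts $Q_k:\vec\pi_1(X_k)\to\vec\pi_1(X_k,B_k)$: each a future retract with unit $\theta^k$, commuting with the inclusion-induced functors from index $0$ to $k=1,2$, with $\theta^0_x$ mapping to $\theta^k_x$ for $x\in X_0$. Compatible future retracts $P_k:\vec\pi_1(X_k,B_k)\to\vec\pi_1(X_k,A_k)$: each a future retract with unit $\eta^k$, $P_k\circ i_k=i'_k\circ P_0$ ($k=1,2$), and $\eta^0_x$ mapping to $\eta^k_x$ for $x\in B_0$. *)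

(* Defs.v *)
(* d-spaces, directed homotopy, fundamental categories
   (represented via path representatives modulo the generated equivalence). *)
From Stdlib Require Import Reals Relations.
Open Scope R_scope.

Definition unit_I (t : R) : Prop := 0 <= t <= 1.

Definition cont_real (phi : R -> R) : Prop :=
  forall t, unit_I t -> forall e, 0 < e ->
    exists d, 0 < d /\ forall s, unit_I s -> Rabs (s - t) < d -> Rabs (phi s - phi t) < e.

Definition nondecr_map (phi : R -> R) : Prop :=
  cont_real phi /\ (forall t, unit_I t -> unit_I (phi t)) /\
  (forall s t, unit_I s -> unit_I t -> s <= t -> phi s <= phi t).

Definition path_cont {T : Type} (op : (T -> Prop) -> Prop) (g : R -> T) : Prop :=
  forall U t, op U -> unit_I t -> U (g t) ->
    exists e, 0 < e /\ forall s, unit_I s -> Rabs (s - t) < e -> U (g s).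

Definition square_cont {T : Type} (op : (T -> Prop) -> Prop) (H : R -> R -> T) : Prop :=
  forall U t s, op U -> unit_I t -> unit_I s -> U (H t s) ->
    exists e, 0 < e /\ forall t' s', unit_I t' -> unit_I s' ->
      Rabs (t' - t) < e -> Rabs (s' - s) < e -> U (H t' s').

Definition pconcat {T : Type} (g d : R -> T) : R -> T :=
  fun t => if Rle_dec t (1/2) then g (2 * t) else d (2 * t - 1).
Definition cst {T : Type} (x : T) : R -> T := fun _ => x.

Record dspace := {
  pt :> Type;
  is_open : (pt -> Prop) -> Prop;
  open_full : is_open (fun _ => True);
  open_inter : forall U V, is_open U -> is_open V -> is_open (fun x => U x /\ V x);
  open_union : forall (J : Type) (F : J -> pt -> Prop),
      (forall j, is_open (F j)) -> is_open (fun x => exists j, F j x);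
  dipath : (R -> pt) -> Prop;
  dipath_cont : forall g, dipath g -> path_cont is_open g;
  dipath_const : forall x, dipath (cst x);
  dipath_reparam : forall g phi d, dipath g -> nondecr_map phi ->
      (forall t, unit_I t -> d t = g (phi t)) -> dipath d;
  dipath_concat : forall g d, dipath g -> dipath d -> g 1 = d 0 -> dipath (pconcat g d)
}.

Section DS.
Variable X : dspace.

Definition dinterior (S : X -> Prop) (x : X) : Prop :=
  exists U, is_open X U /\ U x /\ forall y, U y -> S y.

Definition rel_interior (A S : X -> Prop) (x : X) : Prop :=
  A x /\ exists U, is_open X U /\ U x /\ forall y, U y -> A y -> S y.

Definition dipath_in (Y : X -> Prop) (g : R -> X) : Prop :=
  dipath X g /\ forall t, unit_I t -> Y (g t).

Definition piecewise (X1 X2 : X -> Prop) (g : R -> X) : Prop :=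
  exists (n : nat) (ts : nat -> R), ts 0%nat = 0 /\ ts n = 1 /\
    (forall i, (i < n)%nat -> ts i <= ts (S i)) /\
    forall i, (i < n)%nat ->
      let piece := fun s => g (ts i + s * (ts (S i) - ts i)) in
      dipath_in X1 piece \/ dipath_in X2 piece.

(* morphisms a -> b of the fundamental category of Y restricted to objects in A *)
Definition hom (Y A : X -> Prop) (a b : X) (g : R -> X) : Prop :=
  A a /\ A b /\ dipath_in Y g /\ g 0 = a /\ g 1 = b.

Definition dihomotopy (Y : X -> Prop) (g d : R -> X) : Prop :=
  exists H : R -> R -> X,
    square_cont (is_open X) H /\
    (forall t s, unit_I t -> unit_I s -> Y (H t s)) /\
    (forall p q, nondecr_map p -> nondecr_map q -> dipath X (fun u => H (p u) (q u))) /\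
    (forall s, unit_I s -> H 0 s = g 0 /\ H 1 s = g 1) /\
    (forall t, unit_I t -> H t 0 = g t /\ H t 1 = d t).

(* equality of morphisms in the fundamental category of Y *)
Definition homeq (Y : X -> Prop) : relation (R -> X) :=
  clos_refl_sym_trans _ (dihomotopy Y).

(* (Fo, Fm) is a functor  pi1(Y, B) -> pi1(Y', A')  (Fm acts on representatives) *)
Definition is_functor (Y B Y' A' : X -> Prop) (Fo : X -> X) (Fm : (R -> X) -> (R -> X)) : Prop :=
  (forall x, B x -> A' (Fo x)) /\
  (forall a b g, hom Y B a b g -> hom Y' A' (Fo a) (Fo b) (Fm g)) /\
  (forall a b g d, hom Y B a b g -> hom Y B a b d -> homeq Y g d -> homeq Y' (Fm g) (Fm d)) /\
  (forall a, B a -> homeq Y' (Fm (cst a)) (cst (Fo a))) /\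
  (forall a b c g d, hom Y B a b g -> hom Y B b c d ->
      homeq Y' (Fm (pconcat g d)) (pconcat (Fm g) (Fm d))).

(* future retract P : pi1(Y,B) -> pi1(Y,A), left adjoint to the inclusion,
   with unit eta (eta_x : x -> P x in pi1(Y,B)), eta_a = id_a for a in A.
   Composition "h o g" is pconcat g h. *)
Definition future_retract (Y B A : X -> Prop) (Po : X -> X) (Pm : (R -> X) -> (R -> X))
    (eta : X -> R -> X) : Prop :=
  is_functor Y B Y A Po Pm /\
  (forall x, B x -> hom Y B x (Po x) (eta x)) /\
  (forall x y g, hom Y B x y g -> homeq Y (pconcat g (eta y)) (pconcat (eta x) (Pm g))) /\
  (forall x a f, B x -> A a -> hom Y B x a f ->
     (exists h, hom Y A (Po x) a h /\ homeq Y (pconcat (eta x) h) f) /\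
     (forall h h', hom Y A (Po x) a h -> hom Y A (Po x) a h' ->
        homeq Y (pconcat (eta x) h) f -> homeq Y (pconcat (eta x) h') f -> homeq Y h h')) /\
  (forall a, A a -> Po a = a /\ homeq Y (eta a) (cst a)).

End DS.

Definition sel3 {T : Type} (k : nat) (t0 t1 t2 : T) : T :=
  match k with 0%nat => t0 | 1%nat => t1 | _ => t2 end.

(* Main.v *)
Require Import Defs.
From Stdlib Require Import Reals Relations Lra Lia Ranalysis5.
Open Scope R_scope.

Definition lip (L : R) (f : R -> R) : Prop :=
  0 <= L /\ forall s t, Rabs (f s - f t) <= L * Rabs (s - t).

Definition lmap (L : R) (f : R -> R) : Prop :=
  lip L f /\ (forall t, unit_I t -> unit_I (f t)) /\
  (forall s t, unit_I s -> unit_I t -> s <= t -> f s <= f t).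

Lemma lip_cont L f : lip L f -> cont_real f.
Proof.
  intros [HL Hf] t _ e He.
  exists (e / (L + 1)). split.
  - apply Rdiv_lt_0_compat; lra.
  - intros s _ Hs. eapply Rle_lt_trans. apply Hf.
    apply Rle_lt_trans with ((L+1) * Rabs (s - t)).
    + assert (0 <= Rabs (s - t)) by apply Rabs_pos. nra.
    + apply Rmult_lt_reg_l with (/ (L+1)).
      * apply Rinv_0_lt_compat; lra.
      * rewrite <- Rmult_assoc, Rinv_l by lra. lra.
Qed.

Lemma lmap_nondecr L f : lmap L f -> nondecr_map f.
Proof.
  intros [H1 [H2 H3]]. split; [eapply lip_cont; eauto | split; auto].
Qed.

Lemma lip_weaken L L' f : lip L f -> L <= L' -> lip L' f.
Proof.
  intros [H0 H] HL. split; [lra|]. intros s t. eapply Rle_trans; [apply H|].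
  apply Rmult_le_compat_r; [apply Rabs_pos| lra].
Qed.

Lemma lip_aff a b : lip (Rabs b) (fun t => a + b * t).
Proof.
  split; [apply Rabs_pos|]. intros s t.
  replace (a + b * s - (a + b * t)) with (b * (s - t)) by ring.
  rewrite Rabs_mult. lra.
Qed.

Lemma lip_ext L f g : lip L f -> (forall t, f t = g t) -> lip L g.
Proof.
  intros [H0 H] E. split; auto. intros s t. rewrite <- !E. apply H.
Qed.

Lemma lip_piece L f1 f2 c : lip L f1 -> lip L f2 -> f1 c = f2 c ->
  lip L (fun t => if Rle_dec t c then f1 t else f2 t).
Proof.
  intros [H0 H1] [_ H2] E. split; auto. intros s t.
  destruct (Rle_dec s c); destruct (Rle_dec t c); auto.
  - replace (f1 s - f2 t) with ((f1 s - f1 c) + (f2 c - f2 t)) by (rewrite E; ring).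
    eapply Rle_trans; [apply Rabs_triang|].
    pose proof (H1 s c); pose proof (H2 c t).
    rewrite (Rabs_left1 (s - c)) in * by lra.
    rewrite (Rabs_left1 (c - t)) in * by lra.
    rewrite (Rabs_left1 (s - t)) by lra. nra.
  - replace (f2 s - f1 t) with ((f2 s - f2 c) + (f1 c - f1 t)) by (rewrite E; ring).
    eapply Rle_trans; [apply Rabs_triang|].
    pose proof (H2 s c); pose proof (H1 c t).
    rewrite (Rabs_right (s - c)) in * by lra.
    rewrite (Rabs_right (c - t)) in * by lra.
    rewrite (Rabs_right (s - t)) by lra. nra.
Qed.

Lemma lip_pconcat L f1 f2 : lip L f1 -> lip L f2 -> f1 1 = f2 0 ->
  lip (2 * L) (pconcat f1 f2).
Proof.
  intros H1 H2 E.
  assert (A1 : lip (2 * L) (fun t => f1 (2 * t))).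
  { destruct H1 as [H0 H1]. split; [lra|]. intros s t.
    eapply Rle_trans; [apply H1|].
    replace (2 * s - 2 * t) with (2 * (s - t)) by ring. rewrite Rabs_mult.
    rewrite (Rabs_right 2) by lra. lra. }
  assert (A2 : lip (2 * L) (fun t => f2 (2 * t - 1))).
  { destruct H2 as [H0 H2]. split; [lra|]. intros s t.
    eapply Rle_trans; [apply H2|].
    replace (2 * s - 1 - (2 * t - 1)) with (2 * (s - t)) by ring. rewrite Rabs_mult.
    rewrite (Rabs_right 2) by lra. lra. }
  pose proof (lip_piece _ _ _ (1/2) A1 A2) as P.
  unfold pconcat. apply P.
  simpl. replace (2 * (1/2)) with 1 by field. replace (1 - 1) with 0 by ring. auto.
Qed.

Lemma lmap_pconcat L f1 f2 : lmap L f1 -> lmap L f2 -> f1 1 = f2 0 ->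
  lmap (2 * L) (pconcat f1 f2).
Proof.
  intros [L1 [I1 M1]] [L2 [I2 M2]] E. split; [apply lip_pconcat; auto|].
  unfold pconcat, unit_I in *. split.
  - intros t Ht. destruct (Rle_dec t (1/2)); [apply I1| apply I2]; lra.
  - intros s t Hs Ht Hst. destruct (Rle_dec s (1/2)); destruct (Rle_dec t (1/2)).
    + apply M1; lra.
    + apply Rle_trans with (f1 1); [apply M1; lra|]. rewrite E. apply M2; lra.
    + lra.
    + apply M2; lra.
Qed.

Lemma lmap_aff a b : 0 <= a -> 0 <= b -> a + b <= 1 -> lmap (Rabs b) (fun t => a + b * t).
Proof.
  intros. split; [apply lip_aff|]. unfold unit_I. split.
  - intros t Ht. split; nra.
  - intros. nra.
Qed.

Lemma lmap_const c : unit_I c -> lmap 0 (fun _ => c).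
Proof.
  intros H. split; [split; [lra| intros; unfold Rminus; rewrite Rplus_opp_r, Rabs_R0; lra]|].
  split; auto. intros; lra.
Qed.

Lemma lmap_weaken L L' f : lmap L f -> L <= L' -> lmap L' f.
Proof. intros [A B] H. split; auto. eapply lip_weaken; eauto. Qed.

Lemma cont_comp_lip_out L f p : lip L f -> cont_real p -> cont_real (fun u => f (p u)).
Proof.
  intros [H0 Hf] Hp t Ht e He.
  destruct (Hp t Ht (e / (L + 1))) as [d [Hd Hd']].
  { apply Rdiv_lt_0_compat; lra. }
  exists d; split; auto. intros s Hs Hst. specialize (Hd' s Hs Hst).
  eapply Rle_lt_trans; [apply Hf|].
  apply Rle_lt_trans with ((L+1) * Rabs (p s - p t)).
  - assert (0 <= Rabs (p s - p t)) by apply Rabs_pos. nra.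
  - apply Rmult_lt_reg_l with (/ (L+1)).
    + apply Rinv_0_lt_compat; lra.
    + rewrite <- Rmult_assoc, Rinv_l by lra. rewrite Rmult_1_l.
      apply Rlt_le_trans with (e / (L+1)); [lra| unfold Rdiv; rewrite Rmult_comm; lra].
Qed.

Lemma cont_comp_lip_in L f p : lip L f -> (forall t, unit_I t -> unit_I (f t)) ->
  cont_real p -> cont_real (fun u => p (f u)).
Proof.
  intros [H0 Hf] HI Hp t Ht e He.
  destruct (Hp (f t) (HI t Ht) e He) as [d [Hd Hd']].
  exists (d / (L + 1)). split; [apply Rdiv_lt_0_compat; lra|].
  intros s Hs Hst. apply Hd'; auto.
  eapply Rle_lt_trans; [apply Hf|].
  apply Rle_lt_trans with ((L+1) * Rabs (s - t)).
  - assert (0 <= Rabs (s - t)) by apply Rabs_pos. nra.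
  - apply Rmult_lt_reg_l with (/ (L+1)).
    + apply Rinv_0_lt_compat; lra.
    + rewrite <- Rmult_assoc, Rinv_l by lra. rewrite Rmult_1_l.
      unfold Rdiv in Hst. lra.
Qed.

Definition lip2 (L : R) (sg : R -> R -> R) : Prop :=
  0 <= L /\ forall t s t' s', Rabs (sg t' s' - sg t s) <= L * (Rabs (t' - t) + Rabs (s' - s)).

Lemma cont_lip2 L sg p q : lip2 L sg -> cont_real p -> cont_real q ->
  cont_real (fun u => sg (p u) (q u)).
Proof.
  intros [H0 Hs] Hp Hq t Ht e He.
  set (e' := e / (2 * (L + 1))).
  assert (He' : 0 < e') by (unfold e'; apply Rdiv_lt_0_compat; lra).
  destruct (Hp t Ht e' He') as [d1 [Hd1 Hd1']].
  destruct (Hq t Ht e' He') as [d2 [Hd2 Hd2']].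
  exists (Rmin d1 d2). split; [apply Rmin_pos; auto|].
  intros s Hs' Hst.
  assert (A1 := Hd1' s Hs' (Rlt_le_trans _ _ _ Hst (Rmin_l _ _))).
  assert (A2 := Hd2' s Hs' (Rlt_le_trans _ _ _ Hst (Rmin_r _ _))).
  eapply Rle_lt_trans; [apply Hs|].
  assert (E : e = 2 * (L+1) * e') by (unfold e'; field; lra).
  rewrite E. nra.
Qed.

Lemma Rmin_lip a b a' b' : Rabs (Rmin a b - Rmin a' b') <= Rabs (a - a') + Rabs (b - b').
Proof.
  unfold Rmin. destruct (Rle_dec a b); destruct (Rle_dec a' b');
  unfold Rabs; repeat destruct Rcase_abs; lra.
Qed.

Lemma Rmax_lip a b a' b' : Rabs (Rmax a b - Rmax a' b') <= Rabs (a - a') + Rabs (b - b').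
Proof.
  unfold Rmax. destruct (Rle_dec a b); destruct (Rle_dec a' b');
  unfold Rabs; repeat destruct Rcase_abs; lra.
Qed.

Lemma sq_cont_sigma (X : dspace) g sg L : path_cont (is_open X) g -> lip2 L sg ->
  (forall t s, unit_I t -> unit_I s -> unit_I (sg t s)) ->
  square_cont (is_open X) (fun t s => g (sg t s)).
Proof.
  intros Hg [H0 Hs] HI U t s HU Ht Hs' HUx.
  destruct (Hg U (sg t s) HU (HI t s Ht Hs') HUx) as [e [He He']].
  exists (e / (2 * (L + 1))). split; [apply Rdiv_lt_0_compat; lra|].
  intros t' s' Ht' Hs'' H1 H2. apply He'; [auto|].
  eapply Rle_lt_trans; [apply Hs|].
  assert (E : e = 2 * (L+1) * (e / (2 * (L + 1)))) by (field; lra).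
  rewrite E. set (k := e / (2 * (L + 1))) in *.
  assert (0 <= Rabs (t' - t)) by apply Rabs_pos.
  assert (0 <= Rabs (s' - s)) by apply Rabs_pos. nra.
Qed.

Lemma dipath_ext (X : dspace) f g : dipath X f -> (forall t, unit_I t -> g t = f t) -> dipath X g.
Proof.
  intros Hf E. apply (dipath_reparam X f (fun t => 0 + 1 * t) g Hf).
  - eapply lmap_nondecr, lmap_aff; lra.
  - intros t Ht. rewrite E by auto. f_equal; ring.
Qed.

Lemma dipath_in_ext (X : dspace) Y f g : dipath_in X Y f -> (forall t, unit_I t -> g t = f t) ->
  dipath_in X Y g.
Proof.
  intros [Hf HY] E. split; [eapply dipath_ext; eauto|]. intros t Ht. rewrite E; auto.
Qed.

Lemma dihom_sigma (X : dspace) Y g d1 d2 sg L :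
  dipath_in X Y g -> lip2 L sg ->
  (forall t s, unit_I t -> unit_I s -> unit_I (sg t s)) ->
  (forall t t' s s', unit_I t -> unit_I t' -> unit_I s -> unit_I s' -> t <= t' -> s <= s' ->
      sg t s <= sg t' s') ->
  (forall s, unit_I s -> g (sg 0 s) = d1 0 /\ g (sg 1 s) = d1 1) ->
  (forall t, unit_I t -> g (sg t 0) = d1 t /\ g (sg t 1) = d2 t) ->
  dihomotopy X Y d1 d2.
Proof.
  intros [Hg HY] HL HI HM Hb He.
  exists (fun t s => g (sg t s)). split; [|split; [|split]].
  - eapply sq_cont_sigma; eauto. apply dipath_cont; auto.
  - intros t s Ht Hs. apply HY, HI; auto.
  - intros p q [Cp [Ip Mp]] [Cq [Iq Mq]].
    apply (dipath_reparam X g (fun u => sg (p u) (q u))); auto.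
    split; [eapply cont_lip2; eauto| split].
    + intros t Ht. apply HI; auto.
    + intros s t Hs Ht Hst. apply HM; auto.
  - split; auto.
Qed.

Lemma dihom_refl (X : dspace) Y g : dipath_in X Y g -> dihomotopy X Y g g.
Proof.
  intros H. apply (dihom_sigma X Y g g g (fun t s => t) 1); auto.
  - split; [lra|]. intros. assert (0 <= Rabs (s' - s)) by apply Rabs_pos. lra.
Qed.

Lemma dihom_max (X : dspace) Y g d1 m phi psi L1 L2 :
  dipath_in X Y g -> lmap L1 phi -> lmap L2 psi -> phi 0 = psi 0 -> phi 1 = psi 1 ->
  (forall t, unit_I t -> d1 t = g (phi t)) ->
  (forall t, unit_I t -> m t = g (Rmax (phi t) (psi t))) ->
  dihomotopy X Y d1 m.
Proof.
  intros Hg [[L1p Lp] [Ip Mp]] [[L2p Lq] [Iq Mq]] E0 E1 Ed Em.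
  apply (dihom_sigma X Y g d1 m (fun t s => Rmin (Rmax (phi t) (psi t)) (phi t + s))
           (2 * L1 + L2 + 1)); auto.
  - split; [lra|]. intros t s t' s'.
    eapply Rle_trans; [apply Rmin_lip|].
    pose proof (Rmax_lip (phi t') (psi t') (phi t) (psi t)).
    pose proof (Lp t' t). pose proof (Lq t' t).
    replace (phi t' + s' - (phi t + s)) with ((phi t' - phi t) + (s' - s)) by ring.
    pose proof (Rabs_triang (phi t' - phi t) (s' - s)).
    assert (0 <= Rabs (t' - t)) by apply Rabs_pos.
    assert (0 <= Rabs (s' - s)) by apply Rabs_pos. nra.
  - intros t s Ht Hs. specialize (Ip t Ht); specialize (Iq t Ht). unfold unit_I in *.
    unfold Rmin, Rmax; repeat destruct Rle_dec; lra.
  - intros t t' s s' Ht Ht' Hs Hs' H1 H2.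
    pose proof (Mp t t' Ht Ht' H1). pose proof (Mq t t' Ht Ht' H1).
    unfold Rmin, Rmax; repeat destruct Rle_dec; lra.
  - intros s Hs. assert (U0 : unit_I 0) by (unfold unit_I; lra).
    assert (U1 : unit_I 1) by (unfold unit_I; lra). unfold unit_I in Hs.
    rewrite !Ed by auto. split; f_equal; unfold Rmin, Rmax; repeat destruct Rle_dec; lra.
  - intros t Ht. rewrite Ed, Em by auto. specialize (Ip t Ht); specialize (Iq t Ht).
    unfold unit_I in *. split; f_equal; unfold Rmin, Rmax; repeat destruct Rle_dec; lra.
Qed.

Lemma reparam_homeq (X : dspace) Y g d1 d2 phi psi L1 L2 :
  dipath_in X Y g -> lmap L1 phi -> lmap L2 psi -> phi 0 = psi 0 -> phi 1 = psi 1 ->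
  (forall t, unit_I t -> d1 t = g (phi t)) ->
  (forall t, unit_I t -> d2 t = g (psi t)) ->
  homeq X Y d1 d2.
Proof.
  intros Hg Hp Hq E0 E1 D1 D2.
  set (m := fun t => g (Rmax (phi t) (psi t))).
  apply rst_trans with m.
  - apply rst_step. eapply (dihom_max X Y g d1 m phi psi); eauto.
  - apply rst_sym, rst_step. eapply (dihom_max X Y g d2 m psi phi); eauto.
    intros t Ht. unfold m. rewrite Rmax_comm. auto.
Qed.

Definition clamp (t : R) : R := Rmax 0 (Rmin 1 t).

Lemma ivt_I p v : cont_real p -> p 0 < v -> v < p 1 -> exists c, 0 <= c <= 1 /\ p c = v.
Proof.
  intros Hp H0 H1.
  set (f := fun t => p (clamp t) - v).
  assert (C : forall a, 0 <= a <= 1 -> continuity_pt f a).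
  { intros a Ha. unfold continuity_pt, continue_in, limit1_in, limit_in. simpl.
    unfold Rdist. intros eps Heps.
    destruct (Hp a Ha eps Heps) as [d [Hd Hd']].
    exists d. split; auto. intros x [_ Hx].
    unfold f. assert (clamp a = a) by (unfold clamp, Rmax, Rmin; repeat destruct Rle_dec; lra).
    rewrite H. replace (p (clamp x) - v - (p a - v)) with (p (clamp x) - p a) by ring.
    apply Hd'.
    - unfold unit_I, clamp, Rmax, Rmin; repeat destruct Rle_dec; lra.
    - eapply Rle_lt_trans; [|apply Hx]. unfold clamp, Rmax, Rmin.
      unfold Rabs; repeat destruct Rle_dec; repeat destruct Rcase_abs; lra. }
  assert (c0 : clamp 0 = 0) by (unfold clamp, Rmax, Rmin; repeat destruct Rle_dec; lra).
  assert (c1 : clamp 1 = 1) by (unfold clamp, Rmax, Rmin; repeat destruct Rle_dec; lra).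
  destruct (IVT_interv f 0 1 C) as [c [Hc Hfc]].
  - lra.
  - unfold f. rewrite c0. lra.
  - unfold f. rewrite c1. lra.
  - exists c. split; auto. unfold f in Hfc.
    assert (clamp c = c) by (unfold clamp, Rmax, Rmin; repeat destruct Rle_dec; lra).
    rewrite H in Hfc. lra.
Qed.

Lemma dipath_cut (X : dspace) (g : R -> X) c : 0 < c < 1 ->
  dipath X (fun s => g (c * s)) -> dipath X (fun s => g (c + (1 - c) * s)) -> dipath X g.
Proof.
  intros Hc D1 D2.
  set (i1 := / (2 * c)). set (i2 := / (2 * (1 - c))).
  assert (Hi1 : i1 * (2 * c) = 1) by (unfold i1; field; lra).
  assert (Hi2 : i2 * (2 * (1 - c)) = 1) by (unfold i2; field; lra).
  assert (P1 : 0 < i1) by (unfold i1; apply Rinv_0_lt_compat; lra).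
  assert (P2 : 0 < i2) by (unfold i2; apply Rinv_0_lt_compat; lra).
  set (a := 1/2 - i2 * c).
  set (phi := fun t => if Rle_dec t c then 0 + i1 * t else a + i2 * t).
  apply (dipath_reparam X (pconcat (fun s => g (c * s)) (fun s => g (c + (1 - c) * s))) phi).
  - apply dipath_concat; auto. f_equal; ring.
  - apply (lmap_nondecr (i1 + i2)). split; [|split].
    + apply lip_piece.
      * eapply lip_weaken; [apply lip_aff|]. rewrite Rabs_right; lra.
      * eapply lip_weaken; [apply lip_aff|]. rewrite Rabs_right; lra.
      * unfold a. nra.
    + intros t Ht. unfold phi, unit_I in *. destruct (Rle_dec t c); unfold a; nra.
    + intros s t Hs Ht Hst. unfold phi, unit_I in *.
      destruct (Rle_dec s c); destruct (Rle_dec t c); unfold a; nra.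
  - intros t Ht. unfold phi, pconcat. unfold unit_I in Ht. destruct (Rle_dec t c).
    + destruct (Rle_dec (0 + i1 * t) (1/2)); [|exfalso; nra].
      f_equal. replace (c * (2 * (0 + i1 * t))) with ((i1 * (2 * c)) * t) by ring.
      rewrite Hi1; ring.
    + destruct (Rle_dec (a + i2 * t) (1/2)); [exfalso; unfold a in *; nra|].
      f_equal. unfold a.
      replace (c + (1 - c) * (2 * (1 / 2 - i2 * c + i2 * t) - 1))
        with (c + (i2 * (2 * (1 - c))) * (t - c)) by field.
      rewrite Hi2; ring.
Qed.

Lemma nd_comp p f L a b : nondecr_map p -> lmap L f -> 0 <= b ->
  (forall u, unit_I u -> unit_I (a + b * p (f u))) -> nondecr_map (fun u => a + b * p (f u)).
Proof.
  intros [Cp [Ip Mp]] [Lf [If Mf]] Hb HI. split; [|split; auto].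
  - apply (cont_comp_lip_out (Rabs b) (fun x => a + b * x) (fun u => p (f u))).
    + apply lip_aff.
    + eapply cont_comp_lip_in; eauto.
  - intros s t Hs Ht Hst. assert (p (f s) <= p (f t)) by (apply Mp; auto). nra.
Qed.

Lemma dmap_use (X : dspace) (H : R -> R -> X) p q f L a b :
  (forall p q, nondecr_map p -> nondecr_map q -> dipath X (fun u => H (p u) (q u))) ->
  nondecr_map p -> nondecr_map q -> lmap L f -> 0 <= b ->
  (forall u, unit_I u -> unit_I (a + b * p (f u))) ->
  dipath X (fun u => H (a + b * p (f u)) (0 + 1 * q (f u))).
Proof.
  intros DM Hp Hq Hf Hb HI. apply DM.
  - apply (nd_comp p f L); auto.
  - apply (nd_comp q f L); [exact Hq|exact Hf|lra|]. intros u Hu. destruct Hq as [_ [Iq _]].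
    destruct Hf as [_ [If _]]. specialize (Iq _ (If u Hu)). unfold unit_I in *. lra.
Qed.

Lemma dihom_concat (X : dspace) Y g g' d d' :
  dihomotopy X Y g g' -> dihomotopy X Y d d' -> g 1 = d 0 ->
  dihomotopy X Y (pconcat g d) (pconcat g' d').
Proof.
  intros [H1 [C1 [Y1 [DM1 [B1 E1]]]]] [H2 [C2 [Y2 [DM2 [B2 E2]]]]] Egd.
  assert (J : forall s, unit_I s -> H1 1 s = H2 0 s).
  { intros s Hs. rewrite (proj2 (B1 s Hs)), (proj1 (B2 s Hs)). auto. }
  set (K := fun t s => if Rle_dec t (1/2) then H1 (2 * t) s else H2 (2 * t - 1) s).
  assert (U0 : unit_I 0) by (unfold unit_I; lra).
  assert (U1 : unit_I 1) by (unfold unit_I; lra).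
  exists K. split; [|split; [|split; [|split]]].
  - intros U t s HU Ht Hs HK. unfold K in HK.
    destruct (Rtotal_order t (1/2)) as [Hlt|[Heq|Hgt]].
    + destruct (Rle_dec t (1/2)); [|lra].
      assert (I2 : unit_I (2 * t)) by (unfold unit_I in *; lra).
      destruct (C1 U (2 * t) s HU I2 Hs HK) as [e [He He']].
      exists (Rmin (e / 2) (1/2 - t)). split; [apply Rmin_pos; lra|].
      intros t' s' Ht' Hs' A1 A2. unfold K.
      pose proof (Rmin_l (e/2) (1/2 - t)). pose proof (Rmin_r (e/2) (1/2 - t)).
      destruct (Rabs_def2 _ _ A1). destruct (Rabs_def2 _ _ A2).
      destruct (Rle_dec t' (1/2)); [|lra].
      apply He'; unfold unit_I in *; try lra; apply Rabs_def1; lra.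
    + subst t. destruct (Rle_dec (1/2) (1/2)); [|lra].
      replace (2 * (1/2)) with 1 in HK by field.
      assert (HK2 : U (H2 0 s)) by (rewrite <- J; auto).
      destruct (C1 U 1 s HU U1 Hs HK) as [e1 [He1 He1']].
      destruct (C2 U 0 s HU U0 Hs HK2) as [e2 [He2 He2']].
      exists (Rmin e1 e2 / 2). split; [pose proof (Rmin_pos e1 e2 He1 He2); lra|].
      intros t' s' Ht' Hs' A1 A2. unfold K.
      pose proof (Rmin_l e1 e2). pose proof (Rmin_r e1 e2).
      destruct (Rabs_def2 _ _ A1). destruct (Rabs_def2 _ _ A2).
      destruct (Rle_dec t' (1/2)).
      * apply He1'; unfold unit_I in *; try lra; apply Rabs_def1; lra.
      * apply He2'; unfold unit_I in *; try lra; apply Rabs_def1; lra.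
    + destruct (Rle_dec t (1/2)); [lra|].
      assert (I2 : unit_I (2 * t - 1)) by (unfold unit_I in *; lra).
      destruct (C2 U (2 * t - 1) s HU I2 Hs HK) as [e [He He']].
      exists (Rmin (e / 2) (t - 1/2)). split; [apply Rmin_pos; lra|].
      intros t' s' Ht' Hs' A1 A2. unfold K.
      pose proof (Rmin_l (e/2) (t - 1/2)). pose proof (Rmin_r (e/2) (t - 1/2)).
      destruct (Rabs_def2 _ _ A1). destruct (Rabs_def2 _ _ A2).
      destruct (Rle_dec t' (1/2)); [lra|].
      apply He'; unfold unit_I in *; try lra; apply Rabs_def1; lra.
  - intros t s Ht Hs. unfold K. unfold unit_I in Ht.
    destruct (Rle_dec t (1/2)); [apply Y1|apply Y2]; unfold unit_I; auto; lra.
  - intros p q Hp Hq.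
    assert (F1 : forall u, unit_I u -> p u <= 1/2 -> K (p u) (q u) = H1 (2 * p u) (q u)).
    { intros u Hu Hpu. unfold K. destruct (Rle_dec (p u) (1/2)); [auto|lra]. }
    assert (F2 : forall u, unit_I u -> 1/2 <= p u -> K (p u) (q u) = H2 (2 * p u - 1) (q u)).
    { intros u Hu Hpu. unfold K. destruct (Rle_dec (p u) (1/2)); [|auto].
      assert (p u = 1/2) by lra. rewrite H. replace (2 * (1/2)) with 1 by field.
      replace (1 - 1) with 0 by ring. apply J.
      destruct Hq as [_ [Iq _]]. auto. }
    pose proof Hp as [Cp [Ip Mp]].
    assert (LI : lmap 1 (fun u => 0 + 1 * u)).
    { replace 1 with (Rabs 1) at 1 by (apply Rabs_R1). apply lmap_aff; lra. }
    destruct (Rle_dec (p 1) (1/2)) as [Ha|Ha].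
    { apply dipath_ext with (fun u => H1 (0 + 2 * p (0 + 1 * u)) (0 + 1 * q (0 + 1 * u))).
      - apply (dmap_use X H1 p q (fun u => 0 + 1 * u) 1); auto; try lra.
        intros u Hu. replace (0 + 1 * u) with u by ring.
        assert (p u <= p 1) by (apply Mp; unfold unit_I in *; auto; lra).
        specialize (Ip u Hu). unfold unit_I in *; lra.
      - intros u Hu. replace (0 + 1 * u) with u by ring.
        assert (p u <= p 1) by (apply Mp; unfold unit_I in *; auto; lra).
        rewrite F1 by (auto; lra). f_equal; ring. }
    destruct (Rle_dec (1/2) (p 0)) as [Hb|Hb].
    { apply dipath_ext with (fun u => H2 (-1 + 2 * p (0 + 1 * u)) (0 + 1 * q (0 + 1 * u))).
      - apply (dmap_use X H2 p q (fun u => 0 + 1 * u) 1); auto; try lra.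
        intros u Hu. replace (0 + 1 * u) with u by ring.
        assert (p 0 <= p u) by (apply Mp; unfold unit_I in *; auto; lra).
        specialize (Ip u Hu). unfold unit_I in *; lra.
      - intros u Hu. replace (0 + 1 * u) with u by ring.
        assert (p 0 <= p u) by (apply Mp; unfold unit_I in *; auto; lra).
        rewrite F2 by (auto; lra). f_equal; ring. }
    destruct (ivt_I p (1/2) Cp) as [c [Hc Hpc]]; try lra.
    assert (Hc' : 0 < c < 1).
    { split; destruct (Req_dec c 0); destruct (Req_dec c 1); subst; lra. }
    assert (UC : unit_I c) by (unfold unit_I; lra).
    apply (dipath_cut X _ c Hc').
    + apply dipath_ext with (fun u => H1 (0 + 2 * p (0 + c * u)) (0 + 1 * q (0 + c * u))).
      * apply (dmap_use X H1 p q (fun u => 0 + c * u) (Rabs c)); auto; try lra.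
        -- apply lmap_aff; lra.
        -- intros u Hu. assert (unit_I (0 + c * u)) by (unfold unit_I in *; nra).
           assert (p (0 + c * u) <= p c) by (apply Mp; unfold unit_I in *; auto; nra).
           specialize (Ip _ H). unfold unit_I in *; lra.
      * intros u Hu. assert (unit_I (c * u)) by (unfold unit_I in *; nra).
        replace (0 + c * u) with (c * u) by ring.
        assert (p (c * u) <= p c) by (apply Mp; unfold unit_I in *; auto; nra).
        rewrite F1 by (auto; lra). f_equal; ring.
    + apply dipath_ext with (fun u => H2 (-1 + 2 * p (c + (1 - c) * u))
                                          (0 + 1 * q (c + (1 - c) * u))).
      * apply (dmap_use X H2 p q (fun u => c + (1 - c) * u) (Rabs (1 - c))); auto; try lra.
        -- apply lmap_aff; lra.
        -- intros u Hu. assert (unit_I (c + (1 - c) * u)) by (unfold unit_I in *; nra).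
           assert (p c <= p (c + (1 - c) * u)) by (apply Mp; unfold unit_I in *; auto; nra).
           specialize (Ip _ H). unfold unit_I in *; lra.
      * intros u Hu. assert (unit_I (c + (1 - c) * u)) by (unfold unit_I in *; nra).
        assert (p c <= p (c + (1 - c) * u)) by (apply Mp; unfold unit_I in *; auto; nra).
        rewrite F2 by (auto; lra). f_equal; ring.
  - intros s Hs. unfold K, pconcat.
    destruct (Rle_dec 0 (1/2)); [|lra]. destruct (Rle_dec 1 (1/2)); [lra|].
    replace (2 * 0) with 0 by ring. replace (2 * 1 - 1) with 1 by ring.
    split; [apply B1| apply B2]; auto.
  - intros t Ht. unfold K, pconcat. unfold unit_I in Ht.
    destruct (Rle_dec t (1/2)); [apply E1| apply E2]; unfold unit_I; lra.
Qed.

Lemma dihom_end (X : dspace) Y a b : dihomotopy X Y a b -> a 0 = b 0 /\ a 1 = b 1.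
Proof.
  intros [H [_ [_ [_ [B E]]]]].
  assert (U0 : unit_I 0) by (unfold unit_I; lra).
  assert (U1 : unit_I 1) by (unfold unit_I; lra).
  destruct (B 1 U1) as [B0 B1]. destruct (E 0 U0) as [_ E0]. destruct (E 1 U1) as [_ E1].
  split; congruence.
Qed.

Lemma homeq_end (X : dspace) Y a b : homeq X Y a b -> a 0 = b 0 /\ a 1 = b 1.
Proof.
  induction 1.
  - apply (dihom_end X Y); auto.
  - auto.
  - destruct IHclos_refl_sym_trans; auto.
  - destruct IHclos_refl_sym_trans1, IHclos_refl_sym_trans2; split; congruence.
Qed.

Lemma dihom_mono (X : dspace) (Y Y' : X -> Prop) a b : (forall x, Y x -> Y' x) ->
  dihomotopy X Y a b -> dihomotopy X Y' a b.
Proof.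
  intros S [H [C [Hy R]]]. exists H. split; auto.
Qed.

Lemma homeq_mono (X : dspace) (Y Y' : X -> Prop) a b : (forall x, Y x -> Y' x) ->
  homeq X Y a b -> homeq X Y' a b.
Proof.
  intros S. induction 1.
  - apply rst_step. eapply dihom_mono; eauto.
  - apply rst_refl.
  - apply rst_sym; auto.
  - eapply rst_trans; eauto.
Qed.

Lemma homeq_cong_l (X : dspace) Y g g' d : homeq X Y g g' -> dipath_in X Y d -> g 1 = d 0 ->
  homeq X Y (pconcat g d) (pconcat g' d).
Proof.
  intros H Hd. induction H; intros E.
  - apply rst_step. apply dihom_concat; auto. apply dihom_refl; auto.
  - apply rst_refl.
  - apply rst_sym. apply IHclos_refl_sym_trans.
    destruct (homeq_end X Y _ _ H). congruence.
  - eapply rst_trans; [apply IHclos_refl_sym_trans1; auto|].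
    apply IHclos_refl_sym_trans2. destruct (homeq_end X Y _ _ H). congruence.
Qed.

Lemma homeq_cong_r (X : dspace) Y g d d' : homeq X Y d d' -> dipath_in X Y g -> g 1 = d 0 ->
  homeq X Y (pconcat g d) (pconcat g d').
Proof.
  intros H Hg. induction H; intros E.
  - apply rst_step. apply dihom_concat; auto. apply dihom_refl; auto.
  - apply rst_refl.
  - apply rst_sym. apply IHclos_refl_sym_trans.
    destruct (homeq_end X Y _ _ H). congruence.
  - eapply rst_trans; [apply IHclos_refl_sym_trans1; auto|].
    apply IHclos_refl_sym_trans2. destruct (homeq_end X Y _ _ H). congruence.
Qed.

Definition TT (X : dspace) : X -> Prop := fun _ => True.

Definition mor (X : dspace) (a b : X) (g : R -> X) : Prop :=
  dipath_in X (TT X) g /\ g 0 = a /\ g 1 = b.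

Lemma pconcat_0 {T : Type} (g d : R -> T) : pconcat g d 0 = g 0.
Proof. unfold pconcat. destruct (Rle_dec 0 (1/2)); [|lra]. f_equal; ring. Qed.
Lemma pconcat_1 {T : Type} (g d : R -> T) : pconcat g d 1 = d 1.
Proof. unfold pconcat. destruct (Rle_dec 1 (1/2)); [lra|]. f_equal; ring. Qed.

Lemma dipath_in_concat (X : dspace) Y g d : dipath_in X Y g -> dipath_in X Y d -> g 1 = d 0 ->
  dipath_in X Y (pconcat g d).
Proof.
  intros [Hg Yg] [Hd Yd] E. split; [apply dipath_concat; auto|].
  intros t Ht. unfold pconcat, unit_I in *. destruct (Rle_dec t (1/2));
  [apply Yg|apply Yd]; unfold unit_I; lra.
Qed.

Lemma mor_concat (X : dspace) a b c g d : mor X a b g -> mor X b c d -> mor X a c (pconcat g d).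
Proof.
  intros [Hg [G0 G1]] [Hd [D0 D1]]. split; [apply dipath_in_concat; auto; congruence|].
  rewrite pconcat_0, pconcat_1. auto.
Qed.

Lemma mor_cst (X : dspace) (a : X) : mor X a a (cst a).
Proof.
  split; [split; [apply dipath_const| intros; exact I]|]. split; reflexivity.
Qed.

Lemma homeq_ext (X : dspace) Y f f' : dipath_in X Y f -> (forall t, unit_I t -> f' t = f t) ->
  homeq X Y f f'.
Proof.
  intros Hf E. assert (LI : lmap 1 (fun u => 0 + 1 * u)).
  { replace 1 with (Rabs 1) at 1 by (apply Rabs_R1). apply lmap_aff; lra. }
  apply (reparam_homeq X Y f f f' _ _ 1 1 Hf LI LI); auto.
  - intros t Ht. f_equal; ring.
  - intros t Ht. rewrite E; auto. f_equal; ring.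
Qed.

Lemma lmap_id1 : lmap 1 (fun u => 0 + 1 * u).
Proof. replace 1 with (Rabs 1) at 1 by (apply Rabs_R1). apply lmap_aff; lra. Qed.

Lemma unit_l (X : dspace) a b f : mor X a b f -> homeq X (TT X) (pconcat (cst a) f) f.
Proof.
  intros [Hf [F0 F1]]. apply rst_sym.
  apply (reparam_homeq X (TT X) f f _ (fun u => 0 + 1 * u)
           (pconcat (fun _ => 0) (fun u => 0 + 1 * u)) 1 (2*1) Hf lmap_id1).
  - apply lmap_pconcat; [eapply lmap_weaken; [apply lmap_const; unfold unit_I; lra| lra]
                        | apply lmap_id1 | ring].
  - rewrite pconcat_0. ring.
  - rewrite pconcat_1. ring.
  - intros t Ht. f_equal; ring.
  - intros t Ht. unfold pconcat, cst. destruct (Rle_dec t (1/2)).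
    + rewrite <- F0. reflexivity.
    + f_equal; ring.
Qed.

Lemma unit_r (X : dspace) a b f : mor X a b f -> homeq X (TT X) (pconcat f (cst b)) f.
Proof.
  intros [Hf [F0 F1]]. apply rst_sym.
  apply (reparam_homeq X (TT X) f f _ (fun u => 0 + 1 * u)
           (pconcat (fun u => 0 + 1 * u) (fun _ => 1)) 1 (2*1) Hf lmap_id1).
  - apply lmap_pconcat; [apply lmap_id1 |
       eapply lmap_weaken; [apply lmap_const; unfold unit_I; lra| lra] | ring].
  - rewrite pconcat_0. ring.
  - rewrite pconcat_1. ring.
  - intros t Ht. f_equal; ring.
  - intros t Ht. unfold pconcat, cst. destruct (Rle_dec t (1/2)).
    + f_equal; ring.
    + rewrite <- F1. reflexivity.
Qed.

Lemma assoc (X : dspace) a b c d f g h : mor X a b f -> mor X b c g -> mor X c d h ->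
  homeq X (TT X) (pconcat (pconcat f g) h) (pconcat f (pconcat g h)).
Proof.
  intros Mf Mg Mh.
  assert (Mw : mor X a d (pconcat f (pconcat g h))) by (eapply mor_concat; eauto; eapply mor_concat; eauto).
  destruct Mf as [Hf [F0 F1]]. destruct Mg as [Hg [G0 G1]]. destruct Mh as [Hh [H0 H1]].
  destruct Mw as [Hw _].
  set (A := fun x : R => 0 + (1/2) * x). set (B := fun x : R => 1/2 + (1/4) * x).
  set (C := fun x : R => 3/4 + (1/4) * x).
  apply (reparam_homeq X (TT X) _ _ _ (pconcat (pconcat A B) C) (fun u => 0 + 1 * u) (2*1) 1 Hw);
    [| apply lmap_id1 | | | | ].
  - apply lmap_pconcat.
    + replace 1 with (2 * (1/2)) by field. apply lmap_pconcat.
      * unfold A. eapply lmap_weaken; [apply lmap_aff; lra| rewrite Rabs_right; lra].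
      * unfold B. eapply lmap_weaken; [apply lmap_aff; lra| rewrite Rabs_right; lra].
      * unfold A, B; cbv beta; field.
    + unfold C. eapply lmap_weaken; [apply lmap_aff; lra| rewrite Rabs_right; lra].
    + rewrite pconcat_1. unfold B, C; cbv beta; field.
  - rewrite !pconcat_0. unfold A; cbv beta; lra.
  - rewrite pconcat_1. unfold C; cbv beta; lra.
  - intros t Ht. unfold pconcat, A, B, C, unit_I in *.
    repeat destruct Rle_dec; try (exfalso; lra); try (f_equal; lra).
  - intros t Ht. f_equal; ring.
Qed.

Lemma mor_restr (X : dspace) x y g a b : mor X x y g -> 0 <= a -> a <= b -> b <= 1 ->
  mor X (g a) (g b) (fun s => g (a + (b - a) * s)).
Proof.
  intros [[Hg Yg] _] H1 H2 H3. split; [split|split].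
  - apply (dipath_reparam X g (fun s => a + (b - a) * s)); auto.
    eapply lmap_nondecr, lmap_aff; lra.
  - intros; exact I.
  - f_equal; ring.
  - f_equal; ring.
Qed.

Lemma restr_split (X : dspace) x y g a b c : mor X x y g -> 0 <= a -> a <= b -> b <= c -> c <= 1 ->
  homeq X (TT X) (fun s => g (a + (c - a) * s))
    (pconcat (fun s => g (a + (b - a) * s)) (fun s => g (b + (c - b) * s))).
Proof.
  intros [Hg _] H1 H2 H3 H4.
  apply (reparam_homeq X (TT X) g _ _ (fun s => a + (c - a) * s)
     (pconcat (fun s => a + (b - a) * s) (fun s => b + (c - b) * s)) (Rabs (c - a)) (2 * 1) Hg).
  - apply lmap_aff; lra.
  - apply lmap_pconcat.
    + eapply lmap_weaken; [apply lmap_aff; lra| unfold Rabs; destruct Rcase_abs; lra].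
    + eapply lmap_weaken; [apply lmap_aff; lra| unfold Rabs; destruct Rcase_abs; lra].
    + ring.
  - rewrite pconcat_0. ring.
  - rewrite pconcat_1. ring.
  - intros; reflexivity.
  - intros t Ht. unfold pconcat. destruct Rle_dec; reflexivity.
Qed.

Lemma cong_l (X : dspace) g g' b c d : homeq X (TT X) g g' -> mor X b c d -> g 1 = b ->
  homeq X (TT X) (pconcat g d) (pconcat g' d).
Proof. intros H [Hd [D0 _]] E. apply homeq_cong_l; auto. congruence. Qed.

Lemma cong_r (X : dspace) a b g d d' : homeq X (TT X) d d' -> mor X a b g -> d 0 = b ->
  homeq X (TT X) (pconcat g d) (pconcat g d').
Proof. intros H [Hg [_ G1]] E. apply homeq_cong_r; auto. congruence. Qed.

Lemma hom_mor (X : dspace) Y B a b g : hom X Y B a b g -> mor X a b g.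
Proof. intros [_ [_ [[Hg _] [E0 E1]]]]. split; [split; auto; intros; exact I| auto]. Qed.

Lemma homeq_TT (X : dspace) Y a b : homeq X Y a b -> homeq X (TT X) a b.
Proof. apply homeq_mono. intros; exact I. Qed.
Theorem lemma4p7 (X : dspace) (X1 X2 A1 A2 B1 B2 : X -> Prop)
  (Qo : nat -> X -> X) (Qm : nat -> (R -> X) -> (R -> X)) (theta : nat -> X -> R -> X)
  (Po : nat -> X -> X) (Pm : nat -> (R -> X) -> (R -> X)) (eta : nat -> X -> R -> X)
  (P_o : X -> X) (P_m : (R -> X) -> (R -> X)) :
  let X0 := fun x => X1 x /\ X2 x in
  let A0 := fun x => A1 x /\ A2 x in
  let B0 := fun x => B1 x /\ B2 x in
  let A := fun x => A1 x \/ A2 x in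
  let B := fun x => B1 x \/ B2 x in
  let Xk := fun k => sel3 k X0 X1 X2 in
  let Ak := fun k => sel3 k A0 A1 A2 in
  let Bk := fun k => sel3 k B0 B1 B2 in
  (* van Kampen setup *)
  (forall x, dinterior X X1 x \/ dinterior X X2 x) ->
  (forall g, dipath X g <-> piecewise X X1 X2 g) ->
  (forall x, A1 x -> B1 x) -> (forall x, B1 x -> X1 x) ->
  (forall x, A2 x -> B2 x) -> (forall x, B2 x -> X2 x) ->
  (forall x, A x <-> rel_interior X A A1 x \/ rel_interior X A A2 x) ->
  (forall x, B x <-> rel_interior X B B1 x \/ rel_interior X B B2 x) ->
  (* compatible future retracts Q_k : pi1(X_k) -> pi1(X_k, B_k) *)
  (forall k, (k <= 2)%nat -> future_retract X (Xk k) (Xk k) (Bk k) (Qo k) (Qm k) (theta k)) ->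
  (forall k, (k = 1 \/ k = 2)%nat ->
     (forall x, X0 x -> Qo k x = Qo 0%nat x) /\
     (forall a b g, hom X X0 X0 a b g -> homeq X (Xk k) (Qm k g) (Qm 0%nat g)) /\
     (forall x, X0 x -> homeq X (Xk k) (theta k x) (theta 0%nat x))) ->
  (* compatible future retracts P_k : pi1(X_k, B_k) -> pi1(X_k, A_k) *)
  (forall k, (k <= 2)%nat -> future_retract X (Xk k) (Bk k) (Ak k) (Po k) (Pm k) (eta k)) ->
  (forall k, (k = 1 \/ k = 2)%nat ->
     (forall x, B0 x -> Po k x = Po 0%nat x) /\
     (forall a b g, hom X X0 B0 a b g -> homeq X (Xk k) (Pm k g) (Pm 0%nat g)) /\
     (forall x, B0 x -> homeq X (Xk k) (eta k x) (eta 0%nat x))) ->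
  (* P : pi1(X,B) -> pi1(X,A) a functor with P o j_k = j'_k o P_k *)
  is_functor X (fun _ => True) B (fun _ => True) A P_o P_m ->
  (forall k, (k = 1 \/ k = 2)%nat ->
     (forall x, Bk k x -> P_o x = Po k x) /\
     (forall a b g, hom X (Xk k) (Bk k) a b g -> homeq X (fun _ => True) (P_m g) (Pm k g))) ->
  (* conclusion: eta_y o [g] = P([g]) o eta_x in pi1(X,B) *)
  forall x y g k l, (k = 1 \/ k = 2)%nat -> (l = 1 \/ l = 2)%nat ->
    Bk k x -> Bk l y -> hom X (fun _ => True) B x y g ->
    homeq X (fun _ => True) (pconcat g (eta l y)) (pconcat (eta k x) (P_m g)).
Proof.
  intros X0 A0 B0 A B Xk Ak Bk Hint Hpw HAB1 HBX1 HAB2 HBX2 HA HB HQ HQc HP HPc HPf HPrel.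
  intros x y g k l Hk Hl Hx Hy Hg.
  change (homeq X (TT X) (pconcat g (eta l y)) (pconcat (eta k x) (P_m g))).
  assert (U0 : unit_I 0) by (unfold unit_I; lra).
  assert (U1 : unit_I 1) by (unfold unit_I; lra).
  assert (XU : forall z, Xk 1%nat z \/ Xk 2%nat z).
  { intros z. destruct (Hint z) as [[U [_ [Uz S]]]|[U [_ [Uz S]]]]; [left|right]; apply S; auto. }
  assert (Bsub : forall k0, (k0 = 1 \/ k0 = 2)%nat -> forall z, Bk k0 z -> Xk k0 z).
  { intros k0 [-> | ->] z; unfold Bk, Xk; simpl; auto. }
  assert (BkB : forall k0, (k0 = 1 \/ k0 = 2)%nat -> forall z, Bk k0 z -> B z).
  { intros k0 [-> | ->] z; unfold Bk, B; simpl; auto. }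
  assert (hom_up : forall k0 a b c, (k0 = 1 \/ k0 = 2)%nat -> hom X (Xk k0) (Bk k0) a b c ->
            hom X (TT X) B a b c).
  { intros k0 a b c Hk0 [Ha [Hb [[Hc _] [E0 E1]]]].
    split; [eapply BkB; eauto|split; [eapply BkB; eauto|]]. split; auto. split; auto.
    intros; exact I. }
  assert (Qth : forall k0 z, (k0 = 1 \/ k0 = 2)%nat -> Xk k0 z ->
            hom X (Xk k0) (Xk k0) z (Qo k0 z) (theta k0 z) /\ Bk k0 (Qo k0 z)).
  { intros k0 z Hk0 Hz. assert (Hle : (k0 <= 2)%nat) by lia.
    destruct (HQ k0 Hle) as [[Fo _] [Hu _]]. split; auto. }
  assert (QN : forall k0 z w c, (k0 = 1 \/ k0 = 2)%nat -> hom X (Xk k0) (Xk k0) z w c ->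
            hom X (Xk k0) (Bk k0) (Qo k0 z) (Qo k0 w) (Qm k0 c) /\
            homeq X (TT X) (pconcat c (theta k0 w)) (pconcat (theta k0 z) (Qm k0 c))).
  { intros k0 z w c Hk0 Hc. assert (Hle : (k0 <= 2)%nat) by lia.
    destruct (HQ k0 Hle) as [[_ [Fh _]] [_ [Hn _]]]. split; eauto.
    eapply homeq_TT; eauto. }
  assert (Qret : forall k0 a, (k0 = 1 \/ k0 = 2)%nat -> Bk k0 a ->
            Qo k0 a = a /\ homeq X (TT X) (theta k0 a) (cst a)).
  { intros k0 a Hk0 Ha. assert (Hle : (k0 <= 2)%nat) by lia.
    destruct (HQ k0 Hle) as [_ [_ [_ [_ Hr]]]]. destruct (Hr a Ha). split; auto.
    eapply homeq_TT; eauto. }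
  assert (Qswap : forall k0 j z, (k0 = 1 \/ k0 = 2)%nat -> (j = 1 \/ j = 2)%nat ->
            Xk k0 z -> Xk j z -> Qo k0 z = Qo j z /\ homeq X (TT X) (theta k0 z) (theta j z)).
  { intros k0 j z Hk0 Hj Hz1 Hz2.
    assert (G : Xk 1%nat z -> Xk 2%nat z ->
              Qo 1%nat z = Qo 2%nat z /\ homeq X (TT X) (theta 1%nat z) (theta 2%nat z)).
    { intros Z1 Z2. assert (Z0 : X0 z) by (split; auto).
      destruct (HQc 1%nat (or_introl eq_refl)) as [E1 [_ T1]].
      destruct (HQc 2%nat (or_intror eq_refl)) as [E2 [_ T2]].
      split; [rewrite E1, E2; auto|].
      eapply rst_trans; [eapply homeq_TT; apply T1; auto|].
      apply rst_sym. eapply homeq_TT; apply T2; auto. }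
    destruct Hk0 as [-> | ->]; destruct Hj as [-> | ->].
    - split; [auto| apply rst_refl].
    - apply G; auto.
    - destruct G; auto. split; auto. apply rst_sym; auto.
    - split; [auto| apply rst_refl]. }
  assert (Prel : forall k0, (k0 = 1 \/ k0 = 2)%nat ->
            (forall z, Bk k0 z -> P_o z = Po k0 z) /\
            (forall a b c, hom X (Xk k0) (Bk k0) a b c -> homeq X (TT X) (P_m c) (Pm k0 c))).
  { intros k0 Hk0. destruct (HPrel k0 Hk0) as [H1 H2]. split; auto. }
  assert (etaM : forall k0 b, (k0 = 1 \/ k0 = 2)%nat -> Bk k0 b -> mor X b (P_o b) (eta k0 b)).
  { intros k0 b Hk0 Hb. assert (Hle : (k0 <= 2)%nat) by lia.
    destruct (HP k0 Hle) as [_ [Hu _]]. destruct (Prel k0 Hk0) as [R1 _].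
    rewrite R1 by auto. eapply hom_mor; eauto. }
  assert (PN : forall k0 a b c, (k0 = 1 \/ k0 = 2)%nat -> hom X (Xk k0) (Bk k0) a b c ->
            homeq X (TT X) (pconcat c (eta k0 b)) (pconcat (eta k0 a) (P_m c))).
  { intros k0 a b c Hk0 Hc. assert (Hle : (k0 <= 2)%nat) by lia.
    destruct (HP k0 Hle) as [[_ [Fh _]] [_ [Hn _]]]. destruct (Prel k0 Hk0) as [R1 R2].
    assert (Ha : Bk k0 a) by (destruct Hc; tauto).
    eapply rst_trans; [eapply homeq_TT; apply Hn; eauto|].
    eapply cong_r.
    - apply rst_sym. eapply R2; eauto.
    - apply etaM; eauto.
    - destruct (Fh _ _ _ Hc) as [_ [_ [_ [E0 _]]]]. rewrite E0. rewrite R1; auto. }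
  assert (Pswap : forall k0 j b, (k0 = 1 \/ k0 = 2)%nat -> (j = 1 \/ j = 2)%nat ->
            Bk k0 b -> Bk j b -> homeq X (TT X) (eta k0 b) (eta j b)).
  { intros k0 j b Hk0 Hj Hb1 Hb2.
    assert (G : Bk 1%nat b -> Bk 2%nat b -> homeq X (TT X) (eta 1%nat b) (eta 2%nat b)).
    { intros Z1 Z2. assert (Z0 : B0 b) by (split; auto).
      destruct (HPc 1%nat (or_introl eq_refl)) as [_ [_ T1]].
      destruct (HPc 2%nat (or_intror eq_refl)) as [_ [_ T2]].
      eapply rst_trans; [eapply homeq_TT; apply T1; auto|].
      apply rst_sym. eapply homeq_TT; apply T2; auto. }
    destruct Hk0 as [-> | ->]; destruct Hj as [-> | ->].
    - apply rst_refl.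
    - apply G; auto.
    - apply rst_sym; apply G; auto.
    - apply rst_refl. }
  destruct HPf as [PFo [PFh [PFc [_ PFcomp]]]].
  assert (thetaM : forall k0 z, (k0 = 1 \/ k0 = 2)%nat -> Xk k0 z -> mor X z (Qo k0 z) (theta k0 z)).
  { intros k0 z Hk0 Hz. destruct (Qth k0 z Hk0 Hz). eapply hom_mor; eauto. }
  assert (PmM : forall a b c, hom X (TT X) B a b c -> mor X (P_o a) (P_o b) (P_m c)).
  { intros a b c Hc. eapply hom_mor. apply PFh. exact Hc. }
  assert (hom_cat : forall a b d c e, hom X (TT X) B a b c -> hom X (TT X) B b d e ->
            hom X (TT X) B a d (pconcat c e)).
  { intros a b d c e H1 H2. pose proof (hom_mor _ _ _ _ _ _ H1) as M1.
    pose proof (hom_mor _ _ _ _ _ _ H2) as M2.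
    destruct (mor_concat _ _ _ _ _ _ M1 M2) as [D [E0 E1]].
    destruct H1 as [Ba _]. destruct H2 as [_ [Bd _]]. repeat split; auto; apply D; auto. }
  set (C := fun gm : R -> X => forall k0 l0 z w, (k0 = 1 \/ k0 = 2)%nat -> (l0 = 1 \/ l0 = 2)%nat ->
      gm 0 = z -> gm 1 = w -> Xk k0 z -> Xk l0 w ->
      exists c, hom X (TT X) B (Qo k0 z) (Qo l0 w) c /\
        homeq X (TT X) (pconcat gm (theta l0 w)) (pconcat (theta k0 z) c) /\
        homeq X (TT X) (pconcat c (eta l0 (Qo l0 w))) (pconcat (eta k0 (Qo k0 z)) (P_m c))).
  assert (Cbase : forall j gm, (j = 1 \/ j = 2)%nat -> dipath_in X (Xk j) gm -> C gm).
  { intros j gm Hj Hgm k0 l0 z w Hk0 Hl0 E0 E1 Hz Hw.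
    assert (Hzj : Xk j z) by (rewrite <- E0; apply Hgm; auto).
    assert (Hwj : Xk j w) by (rewrite <- E1; apply Hgm; auto).
    assert (Hh : hom X (Xk j) (Xk j) z w gm).
    { split; [auto|split; [auto|split; [exact Hgm|split; auto]]]. }
    destruct (QN j z w gm Hj Hh) as [Hc N1].
    destruct (Qswap k0 j z Hk0 Hj Hz Hzj) as [Ez Tz].
    destruct (Qswap l0 j w Hl0 Hj Hw Hwj) as [Ew Tw].
    destruct (Qth l0 w Hl0 Hw) as [_ Bw]. destruct (Qth k0 z Hk0 Hz) as [_ Bz].
    destruct (Qth j w Hj Hwj) as [_ Bwj]. destruct (Qth j z Hj Hzj) as [_ Bzj].
    rewrite Ez in *. rewrite Ew in *.
    exists (Qm j gm).
    assert (Mg : mor X z w gm) by (eapply hom_mor; eauto).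
    assert (Mc : mor X (Qo j z) (Qo j w) (Qm j gm)) by (eapply hom_mor; eauto).
    pose proof (thetaM l0 w Hl0 Hw) as Mtl. pose proof (thetaM j z Hj Hzj) as Mtj.
    rewrite Ew in Mtl.
    assert (Hc' : hom X (TT X) B (Qo j z) (Qo j w) (Qm j gm)) by (apply (hom_up j); auto).
    split; [exact Hc'|split].
    - eapply rst_trans; [eapply cong_r; [exact Tw| exact Mg| destruct Mtl as [_ [? _]]; auto]|].
      eapply rst_trans; [exact N1|].
      eapply cong_l; [apply rst_sym; exact Tz| exact Mc| destruct Mtj as [_ [_ ?]]; auto].
    - pose proof (etaM l0 (Qo j w) Hl0 Bw) as Me1.
      pose proof (etaM j (Qo j z) Hj Bzj) as Me2.
      eapply rst_trans; [eapply cong_r; [apply Pswap; [exact Hl0|exact Hj|exact Bw|exact Bwj]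
                                        | exact Mc| destruct Me1 as [_ [? _]]; auto]|].
      eapply rst_trans; [eapply PN; eauto|].
      eapply cong_l; [apply Pswap; auto| eapply PmM; exact Hc'| destruct Me2 as [_ [_ ?]]; auto]. }
  assert (Ccat : forall g1 g2 z m w, mor X z m g1 -> mor X m w g2 -> C g1 -> C g2 -> C (pconcat g1 g2)).
  { intros g1 g2 z m w M1 M2 C1 C2 k0 l0 z' w' Hk0 Hl0 E0 E1 Hz Hw.
    rewrite pconcat_0 in E0. rewrite pconcat_1 in E1.
    pose proof M1 as [_ [M10 M11]]. pose proof M2 as [_ [M20 M21]].
    rewrite M10 in E0. rewrite M21 in E1. subst z' w'.
    assert (exists j, (j = 1 \/ j = 2)%nat /\ Xk j m) as [j [Hj Hm]].
    { destruct (XU m); eauto. }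
    destruct (C1 k0 j z m Hk0 Hj M10 M11 Hz Hm) as [c1 [Hc1 [N1 Q1]]].
    destruct (C2 j l0 m w Hj Hl0 M20 M21 Hm Hw) as [c2 [Hc2 [N2 Q2]]].
    exists (pconcat c1 c2).
    pose proof (hom_mor _ _ _ _ _ _ Hc1) as Mc1. pose proof (hom_mor _ _ _ _ _ _ Hc2) as Mc2.
    pose proof (thetaM k0 z Hk0 Hz) as Mtz. pose proof (thetaM j m Hj Hm) as Mtm.
    pose proof (thetaM l0 w Hl0 Hw) as Mtw.
    pose proof (PmM _ _ _ Hc1) as MP1. pose proof (PmM _ _ _ Hc2) as MP2.
    destruct (Qth k0 z Hk0 Hz) as [_ Bz]. destruct (Qth j m Hj Hm) as [_ Bm].
    destruct (Qth l0 w Hl0 Hw) as [_ Bw].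
    pose proof (etaM k0 _ Hk0 Bz) as Mez. pose proof (etaM j _ Hj Bm) as Mem.
    pose proof (etaM l0 _ Hl0 Bw) as Mew.
    split; [eapply hom_cat; eauto|split].
    - eapply rst_trans; [eapply assoc; eauto|].
      eapply rst_trans; [eapply cong_r; [exact N2 | exact M1 | rewrite pconcat_0; auto]|].
      eapply rst_trans; [apply rst_sym; eapply assoc; eauto|].
      eapply rst_trans; [eapply cong_l; [exact N1| exact Mc2 |
                         rewrite pconcat_1; destruct Mtm as [_ [_ ?]]; auto]|].
      eapply assoc; eauto.
    - eapply rst_trans; [eapply assoc; eauto|].
      eapply rst_trans; [eapply cong_r; [exact Q2| exact Mc1|
                         rewrite pconcat_0; destruct Mc2 as [_ [? _]]; auto]|].
      eapply rst_trans; [apply rst_sym; eapply assoc; eauto|].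
      eapply rst_trans; [eapply cong_l; [exact Q1| exact MP2|
                         rewrite pconcat_1; destruct Mem as [_ [_ ?]]; auto]|].
      eapply rst_trans; [eapply assoc; eauto|].
      eapply cong_r; [apply rst_sym; eapply PFcomp; eauto | exact Mez |
                      rewrite pconcat_0; destruct MP1 as [_ [? _]]; auto]. }
  assert (Cext : forall g0 g1 z w, mor X z w g0 -> homeq X (TT X) g0 g1 -> C g0 -> C g1).
  { intros g0 g1 z w M H Cg k0 l0 z' w' Hk0 Hl0 E0 E1 Hz Hw.
    destruct (homeq_end _ _ _ _ H) as [F0 F1].
    destruct (Cg k0 l0 z' w' Hk0 Hl0 ltac:(congruence) ltac:(congruence) Hz Hw) as [c [Hc [N Q]]].
    exists c. split; auto. split; auto.
    eapply rst_trans; [|exact N].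
    eapply cong_l; [apply rst_sym; exact H| eapply thetaM; eauto| congruence]. }
  pose proof (hom_mor _ _ _ _ _ _ Hg) as Mgx.
  pose proof Mgx as [[Dg _] [G0 G1]].
  destruct (proj1 (Hpw g) Dg) as [n [ts [T0 [Tn [Tm Tp]]]]].
  assert (Tmono : forall i j, (i <= j)%nat -> (j <= n)%nat -> ts i <= ts j).
  { intros i j Hij. induction Hij; intros Hjn; [lra|].
    apply Rle_trans with (ts m); [apply IHHij; lia| apply Tm; lia]. }
  assert (Tb : forall i, (i <= n)%nat -> 0 <= ts i /\ ts i <= 1).
  { intros i Hi. split; [rewrite <- T0; apply Tmono; lia| rewrite <- Tn; apply Tmono; lia]. }
  assert (Piece : forall i, (i < n)%nat -> exists j, (j = 1 \/ j = 2)%nat /\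
             dipath_in X (Xk j) (fun s => g (ts i + (ts (S i) - ts i) * s))).
  { intros i Hi. pose proof (Tp i Hi) as P. cbv zeta in P.
    destruct P as [P|P]; [exists 1%nat | exists 2%nat]; (split; [auto|]);
      (eapply dipath_in_ext; [exact P| intros t _; cbv beta; f_equal; ring]). }
  assert (Cr : forall i, (1 <= i <= n)%nat -> C (fun s => g (ts 0%nat + (ts i - ts 0%nat) * s))).
  { intros i. induction i as [|i IH]; intros Hi; [lia|].
    destruct i as [|i].
    - destruct (Piece 0%nat ltac:(lia)) as [j [Hj Pj]]. eapply Cbase; eauto.
    - assert (B1' := Tb 0%nat ltac:(lia)). assert (B2' := Tb (S i) ltac:(lia)).
      assert (B3' := Tb (S (S i)) ltac:(lia)).
      assert (L1 : ts 0%nat <= ts (S i)) by (apply Tmono; lia).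
      assert (L2 : ts (S i) <= ts (S (S i))) by (apply Tm; lia).
      pose proof (mor_restr X x y g (ts 0%nat) (ts (S i)) Mgx ltac:(lra) L1 ltac:(lra)) as Ma.
      pose proof (mor_restr X x y g (ts (S i)) (ts (S (S i))) Mgx ltac:(lra) L2 ltac:(lra)) as Mb.
      eapply Cext; [eapply mor_concat; [exact Ma| exact Mb]| |].
      + apply rst_sym. eapply restr_split; eauto; lra.
      + eapply Ccat; [exact Ma| exact Mb| apply IH; lia|].
        destruct (Piece (S i) ltac:(lia)) as [j [Hj Pj]]. eapply Cbase; eauto. }
  assert (Cg : C g).
  { assert (Hn1 : (1 <= n)%nat).
    { destruct n; [rewrite T0 in Tn; lra| lia]. }
    assert (B1' := Tb 0%nat ltac:(lia)). assert (B2' := Tb n ltac:(lia)).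
    assert (L1 : ts 0%nat <= ts n) by (apply Tmono; lia).
    pose proof (mor_restr X x y g (ts 0%nat) (ts n) Mgx ltac:(lra) L1 ltac:(lra)) as Ma.
    eapply Cext; [exact Ma| |apply Cr; lia].
    apply homeq_ext; [destruct Ma; auto|].
    intros t Ht. rewrite T0, Tn. f_equal; ring. }
  destruct (Cg k l x y Hk Hl G0 G1 (Bsub k Hk x Hx) (Bsub l Hl y Hy)) as [c [Hc [N Q]]].
  pose proof (thetaM k x Hk (Bsub k Hk x Hx)) as Mt.
  destruct (Qret k x Hk Hx) as [Ex Tx]. destruct (Qret l y Hl Hy) as [Ey Ty].
  rewrite Ex, Ey in *.
  pose proof (hom_mor _ _ _ _ _ _ Hc) as Mc.
  assert (gc : homeq X (TT X) g c).
  { eapply rst_trans; [apply rst_sym; eapply unit_r; exact Mgx|].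
    eapply rst_trans; [eapply cong_r; [apply rst_sym; exact Ty| exact Mgx| reflexivity]|].
    eapply rst_trans; [exact N|].
    eapply rst_trans; [eapply cong_l; [exact Tx| exact Mc| destruct Mt as [_ [_ ?]]; auto]|].
    eapply unit_l; exact Mc. }
  eapply rst_trans; [eapply cong_l; [exact gc| eapply etaM; eauto | exact G1]|].
  eapply rst_trans; [exact Q|].
  eapply cong_r; [eapply PFc; [exact Hc| exact Hg| apply rst_sym; exact gc]| eapply etaM; eauto|].
  destruct (PmM _ _ _ Hc) as [_ [? _]]; auto.
Qed.
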